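(* Let $h_{SR_k}, h_{R_kD}, h_{SP}, h_{R_kP}, h_{R_kR_k} \in \mathbb{C}$, $\sigma_D > 0$, $\zeta \ge 0$, and set $\hat{\zeta} = |h_{R_kR_k}|^2 \zeta$, assumed $>0$. Let $\bar{\mathcal{I}}_P > 0$, $P_S^{\max} > 0$, $P_{R_k}^{\max} > 0$. Consider the optimization problem (Problem 2) $$\max_{P_S, P_{R_k}} \ \bar{\mathcal{C}}_k(P_S, P_{R_k}) = \frac{\frac{P_{R_k}|h_{R_kD}|^2}{\sigma_D^2}\cdot\frac{P_S |h_{SR_k}|^2}{\hat{\zeta} P_{R_k}}}{1 + \frac{P_{R_k}|h_{R_kD}|^2}{\sigma_D^2} + \frac{P_S |h_{SR_k}|^2}{\hat{\zeta} P_{R_k}}}$$ subject to $$|h_{SP}|^2 P_S + |h_{R_kP}|^2 P_{R_k}(1+\zeta) \le \bar{\mathcal{I}}_P,\quad 0 \le P_S \le P_S^{\max},\quad 0 \le P_{R_k} \le P_{R_k}^{\max}.$$ Then Problem 2 is a nonconvex optimization problem in the joint variable $(P_S, P_{R_k})$.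
   Context: A maximization problem is called a convex optimization problem if its objective is a concave function over a convex feasible set; it is nonconvex otherwise. The objective $\bar{\mathcal{C}}_k$ is defined for $P_{R_k} > 0$. The first constraint is the interference at the primary receiver in the non-coherent scenario. *)

(* Defs.v *)
From Stdlib Require Import Reals.
From Coquelicot Require Import Coquelicot.
Open Scope R_scope.

Definition convex_set (S : R * R -> Prop) : Prop :=
  forall p q : R * R, S p -> S q -> forall t : R, 0 <= t <= 1 ->
    S (t * fst p + (1 - t) * fst q, t * snd p + (1 - t) * snd q).

Definition concave_on (S : R * R -> Prop) (f : R * R -> R) : Prop :=
  forall p q : R * R, S p -> S q -> forall t : R, 0 <= t <= 1 ->
    t * f p + (1 - t) * f q
      <= f (t * fst p + (1 - t) * fst q, t * snd p + (1 - t) * snd q).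

Definition convex_max_problem (S : R * R -> Prop) (f : R * R -> R) : Prop :=
  convex_set S /\ concave_on S f.

Definition Cbar (hSR hRD : C) (sigmaD zetahat : R) (p : R * R) : R :=
  let PS := fst p in let PR := snd p in
  let g1 := PR * (Cmod hRD)^2 / sigmaD^2 in
  let g2 := PS * (Cmod hSR)^2 / (zetahat * PR) in
  g1 * g2 / (1 + g1 + g2).

(* Feasible set of Problem 2, intersected with the domain P_R > 0 of the
   objective. *)
Definition feasible (hSP hRP : C) (zeta IP PSmax PRmax : R) (p : R * R) : Prop :=
  let PS := fst p in let PR := snd p in
  (Cmod hSP)^2 * PS + (Cmod hRP)^2 * PR * (1 + zeta) <= IP /\
  0 <= PS <= PSmax /\ 0 <= PR <= PRmax /\ 0 < PR.

(* Main.v *)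
Require Import Defs.
From Stdlib Require Import Reals Lra.
From Coquelicot Require Import Coquelicot.
Open Scope R_scope.

Lemma pos_min3 (a b c : R) : 0 < a -> 0 < b -> 0 < c ->
  exists x, 0 < x /\ x <= a /\ x <= b /\ x <= c.
Proof.
  intros. exists (Rmin a (Rmin b c)).
  repeat split.
  - apply Rmin_glb_lt; [lra|apply Rmin_glb_lt; lra].
  - apply Rmin_l.
  - eapply Rle_trans; [apply Rmin_r|apply Rmin_l].
  - eapply Rle_trans; [apply Rmin_r|apply Rmin_r].
Qed.

Theorem lemma1 (hSR hRD hSP hRP hRR : C) (sigmaD zeta IP PSmax PRmax : R)
  (hsigma : 0 < sigmaD) (hzeta : 0 <= zeta)
  (hzhat : 0 < (Cmod hRR)^2 * zeta)
  (hIP : 0 < IP) (hPS : 0 < PSmax) (hPR : 0 < PRmax)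
  (hSR_nz : hSR <> 0%C) (hRD_nz : hRD <> 0%C) :
  ~ convex_max_problem (feasible hSP hRP zeta IP PSmax PRmax)
      (Cbar hSR hRD sigmaD ((Cmod hRR)^2 * zeta)).
Proof.
  intros [_ Hc].
  set (Z := (Cmod hRR)^2 * zeta) in *.
  assert (hA : 0 < (Cmod hRD)^2) by (apply pow_lt; apply Cmod_gt_0; auto).
  assert (hB : 0 < (Cmod hSR)^2) by (apply pow_lt; apply Cmod_gt_0; auto).
  set (A := (Cmod hRD)^2) in *. set (B := (Cmod hSR)^2) in *.
  set (SP := (Cmod hSP)^2). set (RP := (Cmod hRP)^2).
  assert (hSP0 : 0 <= SP) by (apply pow_le; apply Cmod_ge_0).
  assert (hRP0 : 0 <= RP) by (apply pow_le; apply Cmod_ge_0).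
  assert (hs2 : 0 < sigmaD^2) by (apply pow_lt; lra).
  set (s2 := sigmaD^2) in *.
  destruct (pos_min3 PRmax (IP / (2 * (1 + RP) * (1 + zeta))) 1) as
    [R [HR0 [HR1 [HR2 _]]]]; [lra| apply Rdiv_lt_0_compat; [lra|]; nra |lra|].
  destruct (pos_min3 PSmax (IP / (2 * (1 + SP))) (Z * R^2 * A / (16 * s2 * B))) as
    [e [He0 [He1 [He2 He3]]]]; [lra| apply Rdiv_lt_0_compat; lra |
     apply Rdiv_lt_0_compat; [|nra]; apply Rmult_lt_0_compat; [|lra];
     apply Rmult_lt_0_compat; [lra|apply pow_lt; lra]|].
  assert (HR2' : R * (2 * (1 + RP) * (1 + zeta)) <= IP).
  { apply Rmult_le_compat_r with (r := 2 * (1 + RP) * (1 + zeta)) in HR2; [|nra].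
    replace (IP / (2 * (1 + RP) * (1 + zeta)) * (2 * (1 + RP) * (1 + zeta))) with IP
      in HR2 by (field; lra). exact HR2. }
  assert (He2' : e * (2 * (1 + SP)) <= IP).
  { apply Rmult_le_compat_r with (r := 2 * (1 + SP)) in He2; [|nra].
    replace (IP / (2 * (1 + SP)) * (2 * (1 + SP))) with IP in He2 by (field; lra).
    exact He2. }
  assert (He3' : e * (16 * s2 * B) <= Z * R^2 * A).
  { apply Rmult_le_compat_r with (r := 16 * s2 * B) in He3; [|nra].
    replace (Z * R^2 * A / (16 * s2 * B) * (16 * s2 * B)) with (Z * R^2 * A)
      in He3 by (field; lra). exact He3. }
  assert (K1 : SP * e <= IP / 2) by nra.
  assert (K2 : RP * R * (1 + zeta) <= IP / 2).
  { assert (0 <= R * (1 + zeta)) by nra. nra. }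
  assert (Fp : feasible hSP hRP zeta IP PSmax PRmax (e, R/2)).
  { unfold feasible; cbv beta zeta; cbn [fst snd]; fold SP RP. repeat split; try lra; nra. }
  assert (Fq : feasible hSP hRP zeta IP PSmax PRmax (0, R)).
  { unfold feasible; cbv beta zeta; cbn [fst snd]; fold SP RP. repeat split; try lra; nra. }
  specialize (Hc _ _ Fp Fq (1/2) ltac:(lra)).
  unfold Cbar in Hc; cbv beta zeta in Hc; cbn [fst snd] in Hc; fold A B s2 in Hc.
  replace (1 / 2 * e + (1 - 1 / 2) * 0) with (e/2) in Hc by field.
  replace (1 / 2 * (R / 2) + (1 - 1 / 2) * R) with (3*R/4) in Hc by field.
  set (N := e * A * B / (s2 * Z)).
  assert (hN : 0 < N) by (unfold N; apply Rdiv_lt_0_compat; [apply Rmult_lt_0_compat; [apply Rmult_lt_0_compat|]|apply Rmult_lt_0_compat]; lra).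
  set (D1 := 1 + R / 2 * A / s2 + e * B / (Z * (R / 2))).
  set (D2 := 1 + 3 * R / 4 * A / s2 + e / 2 * B / (Z * (3 * R / 4))).
  assert (E1 : R / 2 * A / s2 * (e * B / (Z * (R / 2))) = N) by (unfold N; field; lra).
  assert (E2 : 3 * R / 4 * A / s2 * (e / 2 * B / (Z * (3 * R / 4))) = N/2)
    by (unfold N; field; lra).
  assert (E3 : 0 * B / (Z * R) = 0) by (field; lra).
  fold D1 D2 in Hc. rewrite E1, E2, E3 in Hc.
  assert (hD1 : 0 < D1).
  { unfold D1. assert (0 < R / 2 * A / s2) by (apply Rdiv_lt_0_compat; [apply Rmult_lt_0_compat|]; lra).
    assert (0 < e * B / (Z * (R / 2))) by (apply Rdiv_lt_0_compat; apply Rmult_lt_0_compat; lra). lra. }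
  assert (hD12 : D1 < D2).
  { unfold D1, D2.
    assert (X : 3 * R / 4 * A / s2 - R / 2 * A / s2 = R * A / (4 * s2)) by (field; lra).
    assert (Y : e * B / (Z * (R / 2)) - e / 2 * B / (Z * (3 * R / 4))
               = 4 * e * B / (3 * Z * R)) by (field; lra).
    assert (W : 4 * e * B / (3 * Z * R) < R * A / (4 * s2)).
    { apply (Rmult_lt_reg_r (12 * Z * R * s2)); [apply Rmult_lt_0_compat; [apply Rmult_lt_0_compat; [apply Rmult_lt_0_compat|]|]; lra|].
      replace (4 * e * B / (3 * Z * R) * (12 * Z * R * s2)) with (16 * e * B * s2)
        by (field; lra).
      replace (R * A / (4 * s2) * (12 * Z * R * s2)) with (3 * Z * R^2 * A)
        by (field; lra).
      assert (0 < Z * R^2 * A) by (apply Rmult_lt_0_compat; [|lra];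
        apply Rmult_lt_0_compat; [lra|apply pow_lt; lra]). nra. }
    lra. }
  assert (hD2 : 0 < D2) by lra.
  assert (hRA : 0 < R * A / s2) by (apply Rdiv_lt_0_compat; [apply Rmult_lt_0_compat|]; lra).
  assert (EE : 1 / 2 * (N / D1) + (1 - 1 / 2) * (R * A / s2 * 0 / (1 + R * A / s2 + 0))
    = 1 / 2 * (N / D1)).
  { assert (0 < R * A) by (apply Rmult_lt_0_compat; lra). field. repeat split; lra. }
  rewrite EE in Hc.
  apply (Rmult_le_compat_r (2 * D1 * D2)) in Hc; [|left; apply Rmult_lt_0_compat; [apply Rmult_lt_0_compat|]; lra].
  replace (1 / 2 * (N / D1) * (2 * D1 * D2)) with (N * D2) in Hc by (field; lra).
  replace (N / 2 / D2 * (2 * D1 * D2)) with (N * D1) in Hc by (field; lra).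
  nra.
Qed.
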